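(* Let $P$ be a well-behaved set of vincular patterns and $n\ge1$. Let $\equiv$ be the equivalence relation on $S_n$ generated by the following rewriting rule. Whenever $\pi\in S_n$ contains an occurrence of some $\tau\in P$ with entries $x_1,\dots,x_k$ (appearing in this left-to-right order in $\pi$, in the same relative order as $\tau$), where the pair $x_ix_{i+1}$ matched to the underlined pair $\underline{k1}$ of $\tau$ occupies adjacent positions in $\pi$, then $\pi\equiv\pi'$, where $\pi'$ is obtained from $\pi$ by swapping the adjacent entries $x_i$ and $x_{i+1}$. Then: - $\equiv$ is a lattice congruence of the weak order on $S_n$; - every equivalence class of $\equiv$ contains exactly one permutation avoiding every pattern in $P$, and this permutation is the minimum of its class.
   Context: $S_n$ is the set of permutations of $[n]$ with the weak order (inclusion of inversion sets $\{(a_i,a_j):i<j,\ a_i>a_j\}$). A lattice congruence is an equivalence relation compatible with joins and meets. Vincular patterns. A vincular pattern is a permutation $\tau\in S_k$ with one underlined pair of consecutive entries. A permutation $\pi$ contains $\tau$ if it has a subsequence whose entries are in the same relative order as $\tau$ and in which the two entries matched to the underlined pair are at adjacent positions of $\pi$; otherwise $\pi$ avoids $\tau$. Well-behaved sets. A set $P$ of vincular patterns is well-behaved if each $\tau\in P$, of length $k\ge2$, has the form $\tau=A\,\underline{k1}\,B$ with $AB$ a permutation of $\{2,\dots,k-1\}$, and every pattern obtained from $\tau$ by permuting the entries within $A$ and within $B$ also lies in $P$. *)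

(* Defs.v *)
From mathcomp Require Import all_boot.
Set Implicit Arguments. Unset Strict Implicit. Unset Printing Implicit Defensive.

Definition is_perm (n : nat) (s : seq nat) : Prop := perm_eq s (iota 1 n).

Definition inversion (s : seq nat) (a b : nat) : Prop :=
  [/\ a \in s, b \in s, b < a & index a s < index b s].

Definition weak_le (s t : seq nat) : Prop :=
  forall a b, inversion s a b -> inversion t a b.

Definition is_join (n : nat) (x y j : seq nat) : Prop :=
  [/\ is_perm n j, weak_le x j, weak_le y j &
      forall u, is_perm n u -> weak_le x u -> weak_le y u -> weak_le j u].
Definition is_meet (n : nat) (x y m : seq nat) : Prop :=
  [/\ is_perm n m, weak_le m x, weak_le m y &
      forall u, is_perm n u -> weak_le u x -> weak_le u y -> weak_le u m].

Definition lattice_congruence (n : nat) (R : seq nat -> seq nat -> Prop) : Prop :=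
  [/\ (forall x, is_perm n x -> R x x),
      (forall x y, is_perm n x -> is_perm n y -> R x y -> R y x),
      (forall x y z, is_perm n x -> is_perm n y -> is_perm n z ->
           R x y -> R y z -> R x z),
      (forall x x' y j j', is_perm n x -> is_perm n x' -> is_perm n y ->
           R x x' -> is_join n x y j -> is_join n x' y j' -> R j j') &
      (forall x x' y m m', is_perm n x -> is_perm n x' -> is_perm n y ->
           R x x' -> is_meet n x y m -> is_meet n x' y m' -> R m m')].

(* A vincular pattern: (tau, i) with tau a permutation of [k] and the
   underlined pair at the (0-based) consecutive positions i, i+1. *)
Definition vpattern := (seq nat * nat)%type.

Definition is_vpattern (p : vpattern) : Prop :=
  is_perm (size p.1) p.1 /\ p.2.+1 < size p.1.

(* idx (strictly increasing positions, 0-based) is an occurrence of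
   the vincular pattern (tau, i) in s. *)
Definition occurrence (s : seq nat) (p : vpattern) (idx : seq nat) : Prop :=
  [/\ size idx = size p.1,
      sorted ltn idx,
      all (fun q => q < size s) idx,
      (forall a b, a < size p.1 -> b < size p.1 ->
         (nth 0 s (nth 0 idx a) < nth 0 s (nth 0 idx b)) =
         (nth 0 p.1 a < nth 0 p.1 b)) &
      nth 0 idx p.2.+1 = (nth 0 idx p.2).+1].

Definition contains (s : seq nat) (p : vpattern) : Prop :=
  exists idx, occurrence s p idx.

Definition avoids_all (P : vpattern -> Prop) (s : seq nat) : Prop :=
  forall p, P p -> ~ contains s p.

Definition well_behaved (P : vpattern -> Prop) : Prop :=
  forall tau i, P (tau, i) ->
    let k := size tau in
    [/\ is_vpattern (tau, i), 2 <= k,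
        nth 0 tau i = k, nth 0 tau i.+1 = 1 &
        forall A' B', perm_eq A' (take i tau) -> perm_eq B' (drop i.+2 tau) ->
          P (A' ++ k :: 1 :: B', i)].

Definition swap_adj (s : seq nat) (q : nat) : seq nat :=
  set_nth 0 (set_nth 0 s q (nth 0 s q.+1)) q.+1 (nth 0 s q).

Definition rewrite_step (P : vpattern -> Prop) (n : nat) (s t : seq nat) : Prop :=
  is_perm n s /\
  exists p idx, [/\ P p, occurrence s p idx & t = swap_adj s (nth 0 idx p.2)].

Inductive gen_equiv (R : seq nat -> seq nat -> Prop) : seq nat -> seq nat -> Prop :=
| ge_step x y : R x y -> gen_equiv R x y
| ge_refl x : gen_equiv R x x
| ge_sym x y : gen_equiv R x y -> gen_equiv R y x
| ge_trans x y z : gen_equiv R x y -> gen_equiv R y z -> gen_equiv R x z.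

(* Main.v *)
Require Import Defs.
From mathcomp Require Import all_boot zify.
From Stdlib Require Import Classical.
Set Implicit Arguments. Unset Strict Implicit. Unset Printing Implicit Defensive.

Lemma perm_uniqP n (s : seq nat) : is_perm n s -> uniq s.
Proof. by move=> h; rewrite (perm_uniq h) iota_uniq. Qed.
Lemma perm_sizeP n (s : seq nat) : is_perm n s -> size s = n.
Proof. by move=> h; rewrite (perm_size h) size_iota. Qed.
Lemma perm_memP n (s : seq nat) v : is_perm n s -> (v \in s) = (0 < v <= n).
Proof. move=> h; rewrite (perm_mem h) mem_iota; lia. Qed.
Lemma perm_mem2 n (s s' : seq nat) v : is_perm n s -> is_perm n s' -> (v \in s) = (v \in s').
Proof. by move=> h h'; rewrite (perm_memP _ h) (perm_memP _ h'). Qed.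

Lemma index_nth_uniq (s : seq nat) p : uniq s -> p < size s -> index (nth 0 s p) s = p.
Proof. by move=> u h; rewrite index_uniq. Qed.

Lemma nth_index_nat (s : seq nat) v : v \in s -> nth 0 s (index v s) = v.
Proof. exact: nth_index. Qed.
Lemma nth_uniq_nat (s : seq nat) i j : i < size s -> j < size s -> uniq s ->
  (nth 0 s i == nth 0 s j) = (i == j).
Proof. exact: nth_uniq. Qed.
Lemma index_mem_nat (s : seq nat) v : (index v s < size s) = (v \in s).
Proof. exact: index_mem. Qed.
Lemma nth_rev_nat (s : seq nat) i : i < size s -> nth 0 (rev s) i = nth 0 s (size s - i.+1).
Proof. exact: nth_rev. Qed.

Lemma mem_nth_nat (s : seq nat) i : i < size s -> nth 0 s i \in s.
Proof. exact: mem_nth. Qed.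

Lemma index_neq (s : seq nat) v q : q < size s -> v != nth 0 s q -> index v s != q.
Proof.
move=> hq hv; apply/eqP=> e; move: hv; rewrite -e nth_index ?eqxx //.
by rewrite -index_mem e.
Qed.

Lemma index_eq_nth (s : seq nat) v q : q < size s -> index v s = q -> v = nth 0 s q.
Proof. move=> hq e; rewrite -e nth_index //; by rewrite -index_mem e. Qed.

Lemma size_swap (s : seq nat) q : q.+1 < size s -> size (swap_adj s q) = size s.
Proof. move=> h; rewrite /swap_adj !size_set_nth; lia. Qed.

Lemma nth_swap (s : seq nat) q j : q.+1 < size s ->
  nth 0 (swap_adj s q) j =
  if j == q then nth 0 s q.+1 else if j == q.+1 then nth 0 s q else nth 0 s j.
Proof.
move=> h; rewrite /swap_adj !nth_set_nth /= !nth_set_nth /=.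
by do !case: eqP => ? //; subst => //; lia.
Qed.

Lemma swapE (s : seq nat) q : q.+1 < size s ->
  swap_adj s q = take q s ++ nth 0 s q.+1 :: nth 0 s q :: drop q.+2 s.
Proof.
move=> h; apply: (@eq_from_nth _ 0).
  rewrite size_swap // size_cat /= size_drop size_takel; lia.
move=> j; rewrite size_swap // => hj; rewrite nth_swap // nth_cat size_takel; last by lia.
case: (ltnP j q) => hjq.
  rewrite nth_take //; case: (eqVneq j q) => [e|]; first by lia.
  by case: (eqVneq j q.+1) => //; lia.
have [e|ne] := eqVneq j q; first by rewrite e subnn.
have [e|ne'] := eqVneq j q.+1; first by rewrite e subSnn.
have -> : j - q = (j - q.+2).+2 by lia.
rewrite /= nth_drop; congr nth; lia.
Qed.

Lemma sdecomp (s : seq nat) q : q.+1 < size s ->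
  s = take q s ++ nth 0 s q :: nth 0 s q.+1 :: drop q.+2 s.
Proof.
move=> h; rewrite -(@drop_nth _ 0 q.+1 s) // -(@drop_nth _ 0 q s) ?cat_take_drop //.
by apply: ltn_trans h.
Qed.

Lemma perm_swap (s : seq nat) q : q.+1 < size s -> perm_eq (swap_adj s q) s.
Proof.
move=> h; rewrite swapE //.
apply: (@perm_trans _ (take q s ++ nth 0 s q :: nth 0 s q.+1 :: drop q.+2 s)); last by rewrite -sdecomp.
by rewrite perm_cat2l; apply/permP=> p /=; rewrite addnCA.
Qed.

Lemma swap_perm n (s : seq nat) q : is_perm n s -> q.+1 < n -> is_perm n (swap_adj s q).
Proof.
move=> hp hq; rewrite /is_perm (perm_trans (perm_swap _)) //.
by rewrite (perm_sizeP hp).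
Qed.

Lemma swapK (s : seq nat) q : q.+1 < size s -> swap_adj (swap_adj s q) q = s.
Proof.
move=> h; apply: (@eq_from_nth _ 0); rewrite ?size_swap ?size_swap //.
move=> j hj; rewrite !nth_swap ?size_swap //.
by repeat (case: eqP => //= ?); subst; lia.
Qed.

Lemma index_swap (s : seq nat) q v : uniq s -> q.+1 < size s ->
  index v (swap_adj s q) =
  if v == nth 0 s q then q.+1 else if v == nth 0 s q.+1 then q else index v s.
Proof.
move=> u h.
have hs := sdecomp h; have ut : uniq (swap_adj s q).
  by rewrite (perm_uniq (perm_swap h)).
case: (eqVneq v (nth 0 s q)) => [->|ne1].
  have e : nth 0 (swap_adj s q) q.+1 = nth 0 s q.
    by rewrite nth_swap // (gtn_eqF (ltnSn q)) eqxx.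
  by rewrite -e index_nth_uniq // size_swap.
case: (eqVneq v (nth 0 s q.+1)) => [->|ne2].
  have : nth 0 (swap_adj s q) q = nth 0 s q.+1 by rewrite nth_swap // eqxx.
  by move=> <-; rewrite index_uniq // size_swap // ltnW.
rewrite swapE //; set x := nth 0 s q; set y := nth 0 s q.+1.
rewrite [in RHS]hs !index_cat; case: ifP => // _ /=.
by rewrite ![_ == v]eq_sym (negbTE ne1) (negbTE ne2).
Qed.

Lemma index_swap_other (s : seq nat) q v : uniq s -> q.+1 < size s ->
  v != nth 0 s q -> v != nth 0 s q.+1 -> index v (swap_adj s q) = index v s.
Proof. by move=> u h n1 n2; rewrite index_swap // (negbTE n1) (negbTE n2). Qed.

Lemma index_swap_lt (s : seq nat) q v p : uniq s -> q.+1 < size s -> (p <= q) || (q.+2 <= p) ->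
  (index v (swap_adj s q) < p) = (index v s < p).
Proof.
move=> u h hp; rewrite index_swap //.
case: (eqVneq v (nth 0 s q)) => [->|n1]; first by rewrite index_nth_uniq //; lia.
case: (eqVneq v (nth 0 s q.+1)) => [->|n2] //; by rewrite index_nth_uniq //; lia.
Qed.

Lemma swap_comm (s : seq nat) q r : r.+1 < size s -> q.+1 < r ->
  swap_adj (swap_adj s q) r = swap_adj (swap_adj s r) q.
Proof.
move=> hr hq; have hq' : q.+1 < size s by lia.
apply: (@eq_from_nth _ 0); rewrite ?size_swap ?size_swap //; try lia.
move=> j hj; rewrite !nth_swap ?size_swap //; try lia.
by repeat (case: eqP => //= ?); subst; lia.
Qed.

Definition tp q i := if i == q then q.+1 else if i == q.+1 then q else i.

Lemma tp_lt q i j : ~~ ((i == q) && (j == q.+1)) -> ~~ ((i == q.+1) && (j == q)) ->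
  (tp q i < tp q j) = (i < j).
Proof. rewrite /tp; by repeat (case: eqP => //= ?); lia. Qed.

Lemma index_swap' (s : seq nat) q v : uniq s -> q.+1 < size s ->
  index v (swap_adj s q) = tp q (index v s).
Proof.
move=> u h; rewrite index_swap // /tp.
case: (eqVneq v (nth 0 s q)) => [->|n1].
  by rewrite index_nth_uniq ?eqxx //; lia.
case: (eqVneq v (nth 0 s q.+1)) => [->|n2].
  by rewrite index_nth_uniq // eqxx (gtn_eqF (ltnSn q)).
by rewrite (negbTE (index_neq _ n1)) ?(negbTE (index_neq _ n2)) //; lia.
Qed.

Definition invb (s : seq nat) a b := [&& a \in s, b \in s, b < a & index a s < index b s].
Lemma invbP (s : seq nat) a b : reflect (inversion s a b) (invb s a b).
Proof. exact: and4P. Qed.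

Lemma inv_swap_desc n (s : seq nat) q a b : is_perm n s -> q.+1 < n -> nth 0 s q.+1 < nth 0 s q ->
  inversion (swap_adj s q) a b <-> inversion s a b /\ ~ (a = nth 0 s q /\ b = nth 0 s q.+1).
Proof.
move=> hp hq hd; have u := perm_uniqP hp; have sz := perm_sizeP hp.
have hm v : (v \in swap_adj s q) = (v \in s) by apply: perm_mem; apply: perm_swap; lia.
rewrite /inversion !hm !index_swap' //; try lia.
split.
  case=> ha hb hab hi; split.
    split=> //; rewrite -(@tp_lt q) //.
    - apply/negP=> /andP[/eqP e1 /eqP e2]; move: hi.
      by rewrite /tp e1 e2; repeat (case: eqP => //= ?); lia.
    - apply/negP=> /andP[/eqP e1 /eqP e2]; move: hab.
      by rewrite -(nth_index_nat ha) -(nth_index_nat hb) e1 e2; lia.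
  case=> e1 e2; move: hi; rewrite e1 e2 !index_nth_uniq // /tp; try lia.
  by rewrite eqxx (gtn_eqF (ltnSn q)) eqxx; lia.
case=> [[ha hb hab hi]] hn; split=> //; rewrite tp_lt //.
  apply/negP=> /andP[/eqP e1 /eqP e2]; apply: hn.
  by rewrite -(nth_index_nat ha) -(nth_index_nat hb) e1 e2.
apply/negP=> /andP[/eqP e1 /eqP e2]; move: hi; rewrite e1 e2; lia.
Qed.

Lemma inv_swap_asc n (s : seq nat) q a b : is_perm n s -> q.+1 < n -> nth 0 s q < nth 0 s q.+1 ->
  inversion (swap_adj s q) a b <-> inversion s a b \/ (a = nth 0 s q.+1 /\ b = nth 0 s q).
Proof.
move=> hp hq hd; have u := perm_uniqP hp; have sz := perm_sizeP hp.
have hm v : (v \in swap_adj s q) = (v \in s) by apply: perm_mem; apply: perm_swap; lia.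
rewrite /inversion !hm !index_swap' //; try lia.
split.
  case=> ha hb hab hi.
  case: (boolP ((index a s == q.+1) && (index b s == q))) => [/andP[/eqP e1 /eqP e2]|n1].
    by right; rewrite -(nth_index_nat ha) -(nth_index_nat hb) e1 e2.
  left; split=> //; move: hi; rewrite tp_lt //.
  apply/negP=> /andP[/eqP e1 /eqP e2]; move: hab.
  by rewrite -(nth_index_nat ha) -(nth_index_nat hb) e1 e2; lia.
case=> [[ha hb hab hi]|[e1 e2]].
  split=> //; rewrite tp_lt //.
    apply/negP=> /andP[/eqP e1 /eqP e2]; move: hab.
    by rewrite -(nth_index_nat ha) -(nth_index_nat hb) e1 e2; lia.
  apply/negP=> /andP[/eqP e1 /eqP e2]; move: hi; rewrite e1 e2; lia.
rewrite e1 e2; split; try (apply: mem_nth_nat; lia); first by [].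
rewrite !index_nth_uniq //; try lia.
by rewrite /tp; repeat (case: eqP => //= ?); lia.
Qed.

Lemma swap_weak n (s : seq nat) q : is_perm n s -> q.+1 < n -> nth 0 s q.+1 < nth 0 s q ->
  weak_le (swap_adj s q) s.
Proof. by move=> hp hq hd a b /(inv_swap_desc _ _ hp hq hd) []. Qed.

Definition mes n s := #|[set ab : 'I_n.+1 * 'I_n.+1 | invb s ab.1 ab.2]|.

Lemma mes_step n (s : seq nat) q : is_perm n s -> q.+1 < n -> nth 0 s q.+1 < nth 0 s q ->
  mes n (swap_adj s q) < mes n s.
Proof.
move=> hp hq hd; apply: proper_card; apply/properP; split.
  apply/subsetP=> [[a b]]; rewrite !inE => /invbP h; apply/invbP.
  by case/(inv_swap_desc _ _ hp hq hd): h.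
have sz := perm_sizeP hp.
have hx : nth 0 s q < n.+1.
  have : nth 0 s q \in s by apply: mem_nth_nat; lia.
  by rewrite (perm_memP _ hp); lia.
have hy : nth 0 s q.+1 < n.+1.
  have : nth 0 s q.+1 \in s by apply: mem_nth_nat; lia.
  by rewrite (perm_memP _ hp); lia.
exists (Ordinal hx, Ordinal hy); rewrite !inE /=.
  apply/invbP; split => //; try (apply: mem_nth_nat; lia).
  by rewrite !index_nth_uniq ?(perm_uniqP hp) //; lia.
by apply/invbP=> /(inv_swap_desc _ _ hp hq hd) [_]; apply.
Qed.

Lemma inv_pos (y : seq nat) i j : uniq y -> i < j -> j < size y ->
  inversion y (nth 0 y i) (nth 0 y j) <-> nth 0 y j < nth 0 y i.
Proof.
move=> u hij hj; split; first by case.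
move=> h; split=> //; try (apply: mem_nth_nat; lia).
by rewrite !index_nth_uniq //; lia.
Qed.

Lemma perm_index_lt n (x : seq nat) a b : is_perm n x -> a \in x -> b \in x -> a != b ->
  ~ (index a x < index b x) -> index b x < index a x.
Proof.
move=> hp ha hb nab h.
have : index a x != index b x.
  apply/eqP=> e; move/eqP: nab; apply; by rewrite -(nth_index_nat ha) e nth_index.
lia.
Qed.

Lemma inv_eq_perm n (x y : seq nat) : is_perm n x -> is_perm n y -> weak_le x y -> weak_le y x -> x = y.
Proof.
move=> px py hxy hyx.
have ux := perm_uniqP px; have uy := perm_uniqP py.
have memxy v : (v \in x) = (v \in y) by apply: perm_mem2 px py.
apply: (@irr_sorted_eq _ (fun a b => index a y < index b y)).
- by move=> ? ? ? /=; lia.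
- by move=> ? /=; lia.
- apply/(sortedP 0)=> i hi.
  have hu : nth 0 x i \in y by rewrite -memxy mem_nth_nat //; lia.
  have hv : nth 0 x i.+1 \in y by rewrite -memxy mem_nth_nat //; lia.
  have ne : nth 0 x i != nth 0 x i.+1 by rewrite nth_uniq_nat //; lia.
  case: (ltngtP (nth 0 x i.+1) (nth 0 x i)) => h.
  + by case: (hxy _ _ (proj2 (inv_pos ux (ltnSn i) hi) h)) => _ _ _.
  + apply: (perm_index_lt py) => //; first by rewrite eq_sym.
    move=> hl; have := hyx _ _ (And4 hv hu h hl).
    by case=> _ _ _; rewrite !index_nth_uniq //; lia.
  + by move/eqP: ne; rewrite h.
- apply/(sortedP 0)=> i hi; rewrite !index_nth_uniq //; lia.
- by move=> v; rewrite memxy.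
Qed.

Lemma desc_lemma n (x y : seq nat) : is_perm n x -> is_perm n y -> weak_le x y -> x <> y ->
  exists r, [/\ r.+1 < n, nth 0 y r.+1 < nth 0 y r & ~ inversion x (nth 0 y r) (nth 0 y r.+1)].
Proof.
move=> px py hxy nxy; apply: NNPP => hn; apply: nxy.
have ux := perm_uniqP px; have uy := perm_uniqP py.
have szy := perm_sizeP py.
have memxy v : (v \in x) = (v \in y) by apply: perm_mem2 px py.
have hdesc r : r.+1 < n -> nth 0 y r.+1 < nth 0 y r ->
    inversion x (nth 0 y r) (nth 0 y r.+1).
  move=> h1 h2; apply: NNPP => h3; apply: hn; by exists r.
have inx i : i < n -> nth 0 y i \in x by move=> h; rewrite memxy mem_nth_nat //; lia.
have aux i j : i < j -> j < n -> nth 0 y i < nth 0 y j ->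
    index (nth 0 y i) x <= index (nth 0 y j) x.
  move=> hij hj hl; rewrite leqNgt; apply/negP=> hh.
  have := hxy _ _ (And4 (inx _ hj) (inx i (ltn_trans hij hj)) hl hh).
  by case=> _ _ _; rewrite !index_nth_uniq //; lia.
have key d : forall i j, j - i <= d -> i < j -> j < n -> nth 0 y j < nth 0 y i ->
    index (nth 0 y i) x < index (nth 0 y j) x.
  elim: d => [|d IH] i j hd hij hj hl; first by lia.
  have [e|ne] := eqVneq j i.+1.
    by subst j; case: (hdesc i hj hl).
  have hi1 : i.+1 < j by lia.
  have nb1 : nth 0 y i != nth 0 y i.+1 by rewrite nth_uniq_nat //; lia.
  have nb2 : nth 0 y i.+1 != nth 0 y j by rewrite nth_uniq_nat //; lia.
  have c1 : index (nth 0 y i) x < index (nth 0 y i.+1) x \/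
            (index (nth 0 y i) x <= index (nth 0 y i.+1) x /\ nth 0 y i < nth 0 y i.+1).
    case: (ltngtP (nth 0 y i.+1) (nth 0 y i)) => h.
    + by left; apply: IH => //; lia.
    + by right; split=> //; apply: aux => //; lia.
    + by move/eqP: nb1; rewrite h.
  have c2 : index (nth 0 y i.+1) x < index (nth 0 y j) x \/
            (index (nth 0 y i.+1) x <= index (nth 0 y j) x /\ nth 0 y i.+1 < nth 0 y j).
    case: (ltngtP (nth 0 y j) (nth 0 y i.+1)) => h.
    + by left; apply: IH => //; lia.
    + by right; split=> //; apply: aux => //; lia.
    + by move/eqP: nb2; rewrite h.
  lia.
apply: (inv_eq_perm px py hxy) => a b [ha hb hab hi].
have ia := index_mem_nat y a; have ib := index_mem_nat y b.
rewrite ha in ia; rewrite hb in ib.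
move: (key n (index a y) (index b y)); rewrite !nth_index_nat // => h.
split; rewrite ?memxy //; apply: h => //; lia.
Qed.

Lemma index_rev (s : seq nat) v : uniq s -> v \in s ->
  index v (rev s) = size s - (index v s).+1.
Proof.
move=> u hv; have hi := index_mem_nat s v; rewrite hv in hi.
have e : nth 0 (rev s) (size s - (index v s).+1) = v.
  by rewrite nth_rev_nat; [rewrite (_ : size s - _ = index v s) ?nth_index //|]; lia.
by rewrite -{1}e index_nth_uniq ?rev_uniq ?size_rev //; lia.
Qed.

Lemma perm_rev' n (s : seq nat) : is_perm n s -> is_perm n (rev s).
Proof. by rewrite /is_perm perm_rev. Qed.

Lemma inv_rev n (s : seq nat) a b : is_perm n s ->
  inversion (rev s) a b <-> [/\ a \in s, b \in s, b < a & index b s < index a s].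
Proof.
move=> hp; have u := perm_uniqP hp; rewrite /inversion !mem_rev.
split=> [[ha hb hab]|[ha hb hab]]; rewrite !index_rev //; split=> //.
  have := index_mem_nat s a; have := index_mem_nat s b; rewrite ha hb; lia.
have := index_mem_nat s a; have := index_mem_nat s b; rewrite ha hb; lia.
Qed.

Lemma weak_le_rev n (x y : seq nat) : is_perm n x -> is_perm n y ->
  weak_le (rev x) (rev y) <-> weak_le y x.
Proof.
move=> px py; have ux := perm_uniqP px; have uy := perm_uniqP py.
have memxy v : (v \in x) = (v \in y) by apply: perm_mem2 px py.
split=> h a b.
  case=> ha hb hab hi; split; rewrite ?memxy //.
  apply: NNPP => hn.
  have hx : index b x < index a x.
    apply: (perm_index_lt px); rewrite ?memxy //; first by rewrite eq_sym; apply/eqP; lia.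
  have := h a b (proj2 (inv_rev _ _ px) (And4 _ _ hab hx)).
  rewrite memxy ha memxy hb => /(_ isT isT) /(inv_rev _ _ py) [_ _ _]; lia.
move/(inv_rev _ _ px)=> [ha hb hab hi]; apply/(inv_rev _ _ py); split; rewrite -?memxy //.
apply: NNPP => hn.
have hy : index a y < index b y.
  by apply: (perm_index_lt py); rewrite -?memxy //; apply/eqP; lia.
have := h a b (And4 _ _ hab hy); rewrite -memxy ha -memxy hb => /(_ isT isT) [_ _ _]; lia.
Qed.

Lemma rev_swap (s : seq nat) q : q.+1 < size s -> rev (swap_adj s q) = swap_adj (rev s) (size s - q.+2).
Proof.
move=> h; apply: (@eq_from_nth _ 0).
  by rewrite size_rev !size_swap ?size_rev //; lia.
move=> j; rewrite size_rev size_swap // => hj.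
rewrite nth_rev_nat ?size_swap // !nth_swap ?size_rev; try lia.
repeat (case: eqP => ?); try lia; rewrite nth_rev_nat; try lia; congr nth; lia.
Qed.

Lemma index_cat_nat (v : nat) (s1 s2 : seq nat) :
  index v (s1 ++ s2) = (if v \in s1 then index v s1 else size s1 + index v s2).
Proof. exact: index_cat. Qed.

Lemma idx_win (L w R : seq nat) v j : v \notin w -> j <= size w ->
  (index v (L ++ w ++ R) < size L + j) = (v \in L).
Proof.
move=> hv hj; rewrite index_cat_nat; case: ifP => hL.
  by have := index_mem_nat L v; rewrite hL; lia.
by rewrite index_cat_nat (negbTE hv); lia.
Qed.

Lemma nth_win (L w R : seq nat) j : j < size w -> nth 0 (L ++ w ++ R) (size L + j) = nth 0 w j.
Proof. by move=> h; rewrite nth_cat ltnNge leq_addr /= addKn nth_cat h. Qed.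

Lemma swap_win (L w R : seq nat) j : j.+1 < size w ->
  swap_adj (L ++ w ++ R) (size L + j) = L ++ swap_adj w j ++ R.
Proof.
move=> h; apply: (@eq_from_nth _ 0).
  by rewrite !size_cat !size_swap ?size_cat //; lia.
move=> i; rewrite size_swap ?size_cat; last by lia.
move=> hi; rewrite nth_swap ?size_cat; last by lia.
rewrite !nth_cat size_swap // nth_swap //.
by repeat (case: ifP => /eqP ? || case: ifP => ?); try lia; try (congr nth; lia).
Qed.

Lemma win3 (s : seq nat) q : q.+2 < size s ->
  s = take q s ++ [:: nth 0 s q; nth 0 s q.+1; nth 0 s q.+2] ++ drop q.+3 s.
Proof.
move=> h; rewrite /= -(@drop_nth _ 0 q.+2 s) // -(@drop_nth _ 0 q.+1 s); last by lia.
by rewrite -(@drop_nth _ 0 q s) ?cat_take_drop //; lia.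
Qed.

Lemma size_take_le (s : seq nat) q : q <= size s -> size (take q s) = q.
Proof. exact: size_takel. Qed.

Section Abs.
Variable n : nat.
Variable K : seq nat -> nat -> Prop.
Definition Mono := forall s s' q q', is_perm n s -> is_perm n s' -> q.+1 < n -> q'.+1 < n ->
  nth 0 s q.+1 < nth 0 s q -> nth 0 s' q'.+1 <= nth 0 s q.+1 -> nth 0 s q <= nth 0 s' q' ->
  (forall v, nth 0 s q.+1 < v < nth 0 s q -> (index v s < q) = (index v s' < q')) ->
  K s q -> K s' q'.
Hypothesis HK : Mono.

Definition step s t := is_perm n s /\
  exists q, [/\ q.+1 < n, nth 0 s q.+1 < nth 0 s q, K s q & t = swap_adj s q].
Inductive star : seq nat -> seq nat -> Prop :=
| st_refl s : star s s
| st_step s t u : step s t -> star t u -> star s u.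
Definition normal s := forall t, ~ step s t.
Definition NF s u := star s u /\ normal u.

Lemma step_perm s t : step s t -> is_perm n t.
Proof. by case=> hp [q [hq _ _ ->]]; apply: swap_perm. Qed.

Lemma star_perm s t : is_perm n s -> star s t -> is_perm n t.
Proof. by move=> hp h; elim: h hp => // s0 t0 u0 /step_perm h _ IH _; apply: IH. Qed.

Lemma step_mes s t : step s t -> mes n t < mes n s.
Proof. by case=> hp [q [hq hd _ ->]]; apply: mes_step. Qed.

Lemma star_trans s t u : star s t -> star t u -> star s u.
Proof. by elim=> // s0 t0 u0 h _ IH /IH; apply: st_step. Qed.

Lemma star1 s t : step s t -> star s t.
Proof. by move=> h; apply: st_step h (st_refl _). Qed.

Lemma step_weak s t : step s t -> weak_le t s.
Proof. by case=> hp [q [hq hd _ ->]]; exact: (swap_weak hp hq hd). Qed.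

Lemma star_weak s t : star s t -> weak_le t s.
Proof.
elim=> [s0 a b //|s0 t0 u0 h _ IH] a b /IH; exact: step_weak h a b.
Qed.

Lemma Kstep s s' q q' : is_perm n s -> is_perm n s' -> q.+1 < n -> q'.+1 < n ->
  nth 0 s q.+1 < nth 0 s q -> nth 0 s' q'.+1 <= nth 0 s q.+1 -> nth 0 s q <= nth 0 s' q' ->
  (forall v, nth 0 s q.+1 < v < nth 0 s q -> (index v s < q) = (index v s' < q')) ->
  K s q -> step s' (swap_adj s' q').
Proof.
move=> p p' hq hq' hd h1 h2 hi k; split=> //; exists q'; split=> //; first by lia.
exact: HK p p' hq hq' hd h1 h2 hi k.
Qed.

Lemma Kwin L w w' R j j' :
  is_perm n (L ++ w ++ R) -> is_perm n (L ++ w' ++ R) ->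
  j.+1 < size w -> j'.+1 < size w' -> size L + size w <= n -> size L + size w' <= n ->
  nth 0 w j.+1 < nth 0 w j -> nth 0 w' j'.+1 <= nth 0 w j.+1 -> nth 0 w j <= nth 0 w' j' ->
  (forall v, nth 0 w j.+1 < v < nth 0 w j -> v \notin w /\ v \notin w') ->
  K (L ++ w ++ R) (size L + j) ->
  step (L ++ w' ++ R) (L ++ swap_adj w' j' ++ R).
Proof.
move=> p p' hj hj' s1 s2 h1 h2 h3 hv k; rewrite -swap_win //.
apply: (Kstep p p' _ _ _ _ _ _ k); rewrite -?addnS ?nth_win //; try lia.
move=> v /hv [n1 n2].
have e1 := @idx_win L w R v j n1 (ltnW (ltnW hj)).
have e2 := @idx_win L w' R v j' n2 (ltnW (ltnW hj')).
by rewrite e1 e2.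
Qed.

Lemma local_conf_lt s q r t1 t2 : is_perm n s -> q < r -> r.+1 < n ->
  nth 0 s q.+1 < nth 0 s q -> nth 0 s r.+1 < nth 0 s r -> K s q -> K s r ->
  t1 = swap_adj s q -> t2 = swap_adj s r ->
  exists u, star t1 u /\ star t2 u.
Proof.
move=> p hqr hr dq dr kq kr -> ->.
have sz := perm_sizeP p; have us := perm_uniqP p.
have [e|ne] := eqVneq r q.+1.
  subst r.
  have hw := win3 (_ : q.+2 < size s); rewrite sz in hw; move: (hw hr).
  set L := take q s; set c := nth 0 s q; set b := nth 0 s q.+1; set a := nth 0 s q.+2.
  set R := drop q.+3 s => es.
  have hL : size L = q by rewrite /L size_takel //; lia.
  have p0 : is_perm n (L ++ [:: c; b; a] ++ R) by rewrite -es.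
  have kq' : K (L ++ [:: c; b; a] ++ R) (size L + 0) by rewrite hL addn0 -es.
  have kr' : K (L ++ [:: c; b; a] ++ R) (size L + 1) by rewrite hL addn1 -es.
  have e1 : swap_adj s q = L ++ [:: b; c; a] ++ R by rewrite {1}es -hL -[size L]addn0 swap_win.
  have e2 : swap_adj s q.+1 = L ++ [:: c; a; b] ++ R by rewrite {1}es -hL -addn1 swap_win.
  rewrite e1 e2.
  have pm w : perm_eq w [:: c; b; a] -> is_perm n (L ++ w ++ R).
    move=> hw'; apply: (perm_trans _ p); rewrite [in X in perm_eq _ X]es perm_cat2l perm_cat2r //.
  have pbca : perm_eq [:: b; c; a] [:: c; b; a] by apply/permP=> f /=; lia.
  have pcab : perm_eq [:: c; a; b] [:: c; b; a] by apply/permP=> f /=; lia.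
  have pbac : perm_eq [:: b; a; c] [:: c; b; a] by apply/permP=> f /=; lia.
  have pacb : perm_eq [:: a; c; b] [:: c; b; a] by apply/permP=> f /=; lia.
  have hsz : size L + 3 <= n by lia.
  have hab : a < b by []. have hbc : b < c by [].
  have st1 : step (L ++ [:: b; c; a] ++ R) (L ++ [:: b; a; c] ++ R).
    apply: (Kwin p0 (pm _ pbca) (j:=1) (j':=1) _ _ hsz hsz _ _ _ _ kr') => //=;
    first [lia | (move=> v hv; rewrite !inE; lia)].
  have st2 : step (L ++ [:: b; a; c] ++ R) (L ++ [:: a; b; c] ++ R).
    apply: (Kwin p0 (pm _ pbac) (j:=1) (j':=0) _ _ hsz hsz _ _ _ _ kr') => //=;
    first [lia | (move=> v hv; rewrite !inE; lia)].
  have st3 : step (L ++ [:: c; a; b] ++ R) (L ++ [:: a; c; b] ++ R).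
    apply: (Kwin p0 (pm _ pcab) (j:=0) (j':=0) _ _ hsz hsz _ _ _ _ kq') => //=;
    first [lia | (move=> v hv; rewrite !inE; lia)].
  have st4 : step (L ++ [:: a; c; b] ++ R) (L ++ [:: a; b; c] ++ R).
    apply: (Kwin p0 (pm _ pacb) (j:=0) (j':=1) _ _ hsz hsz _ _ _ _ kq') => //=;
    first [lia | (move=> v hv; rewrite !inE; lia)].
  exists (L ++ [:: a; b; c] ++ R); split.
    exact: st_step st1 (star1 st2).
  exact: st_step st3 (star1 st4).
have hqr' : q.+1 < r by lia.
exists (swap_adj (swap_adj s q) r); split.
  apply: star1; apply: (Kstep p (swap_perm p _) _ _ dr _ _ _ kr) => //; try lia.
  - by rewrite !nth_swap ?sz; try lia; rewrite !ifN_eq //; lia.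
  - by rewrite !nth_swap ?sz; try lia; rewrite !ifN_eq //; lia.
  - by move=> v _; rewrite index_swap_lt ?sz //; lia.
rewrite swap_comm ?sz //.
apply: star1; apply: (Kstep p (swap_perm p _) _ _ dq _ _ _ kq) => //; try lia.
- by rewrite !nth_swap ?sz; try lia; rewrite !ifN_eq //; lia.
- by rewrite !nth_swap ?sz; try lia; rewrite !ifN_eq //; lia.
- by move=> v _; rewrite index_swap_lt ?sz //; lia.
Qed.


Lemma local_conf s t1 t2 : step s t1 -> step s t2 -> exists u, star t1 u /\ star t2 u.
Proof.
case=> p [q [hq dq kq e1]] [_ [r [hr dr kr e2]]].
case: (ltngtP q r) => h.
- exact: (local_conf_lt p h hr dq dr kq kr e1 e2).
- have [u [h1 h2]] := local_conf_lt p h hq dr dq kr kq e2 e1. by exists u.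
- subst; exists (swap_adj s r); split; exact: st_refl.
Qed.

Lemma wf_mes (Q : seq nat -> Prop) :
  (forall s, (forall t, mes n t < mes n s -> Q t) -> Q s) -> forall s, Q s.
Proof.
move=> h s; move: {2}(mes n s) (leqnn (mes n s)) => m; elim: m s => [|m IH] s hm.
  by apply: h => t; lia.
by apply: h => t ht; apply: IH; lia.
Qed.

Lemma nf_exists s : is_perm n s -> exists u, NF s u.
Proof.
move: s; apply: wf_mes => s IH p.
case: (classic (exists t, step s t)) => [[t st]|hn].
  have [u [h1 h2]] := IH t (step_mes st) (step_perm st).
  by exists u; split=> //; apply: st_step st h1.
by exists s; split; [apply: st_refl | move=> t st; apply: hn; exists t].
Qed.

Lemma star_inv s u : star s u -> s = u \/ exists t, step s t /\ star t u.
Proof. by case=> [s0|s0 t u0 st h]; [left | right; exists t]. Qed.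

Lemma nf_unique s u1 u2 : is_perm n s -> NF s u1 -> NF s u2 -> u1 = u2.
Proof.
move: s u1 u2; apply: wf_mes => s IH u1 u2 p [h1 n1] [h2 n2].
case/star_inv: h1 => [e1|[t1 [st1 h1]]].
  subst u1; case/star_inv: h2 => [//|[t2 [st2 _]]]; by case: (n1 _ st2).
case/star_inv: h2 => [e2|[t2 [st2 h2]]]; first by subst u2; case: (n2 _ st1).
have [w [w1 w2]] := local_conf st1 st2.
have pw : is_perm n w by apply: star_perm w1; apply: step_perm st1.
have [v [hv nv]] := nf_exists pw.
rewrite (IH t1 (step_mes st1) u1 v (step_perm st1)) //; last by split=> //; apply: star_trans hv.
symmetry; apply: (IH t2 (step_mes st2) u2 v (step_perm st2)) => //.
by split=> //; apply: star_trans hv.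
Qed.

Lemma NF_step x x' u : step x x' -> NF x u -> NF x' u.
Proof.
move=> st hu; have p' := step_perm st.
have [v hv] := nf_exists p'.
suff -> : u = v by [].
apply: (nf_unique (proj1 st)) hu _; case: hv => h1 h2; split=> //.
exact: st_step st h1.
Qed.

Lemma NF_star x x' u : star x x' -> NF x u -> NF x' u.
Proof. by elim=> // s t v st _ IH /(NF_step st). Qed.

Lemma NF_normal u v : normal u -> NF u v -> v = u.
Proof. by move=> nu [/star_inv [//|[t [st _]]] _]; case: (nu _ st). Qed.

Lemma NF_back x x' u : star x x' -> NF x' u -> NF x u.
Proof. by move=> h [h1 h2]; split=> //; apply: star_trans h h1. Qed.

Lemma weak_refl x : weak_le x x. Proof. by []. Qed.
Lemma weak_trans x y z : weak_le x y -> weak_le y z -> weak_le x z.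
Proof. by move=> h1 h2 a b /h1 /h2. Qed.

Lemma win_perm L w w' R : is_perm n (L ++ w ++ R) -> perm_eq w' w -> is_perm n (L ++ w' ++ R).
Proof. by move=> p hw; apply: (perm_trans _ p); rewrite perm_cat2l perm_cat2r. Qed.

Lemma cover y q u v : is_perm n y -> q.+1 < n -> nth 0 y q.+1 < nth 0 y q ->
  NF (swap_adj y q) u -> NF y v -> weak_le u v.
Proof.
move: y q u v; apply: wf_mes => y IH q u v p hq dq hu hv.
have sz := perm_sizeP p; have uy := perm_uniqP p.
case: (classic (K y q)) => kq.
  have st : step y (swap_adj y q) by split=> //; exists q; split.
  have hu' : NF y u by apply: NF_back (star1 st) hu.
  by rewrite (nf_unique p hu' hv).
case: (classic (normal y)) => ny.
  rewrite (NF_normal ny hv); apply: weak_trans (star_weak (proj1 hu)) _.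
  exact: swap_weak p hq dq.
have [t st] : exists t, step y t.
  by apply: NNPP => h; apply: ny => t st; apply: h; exists t.
have st' := st; case: st' => _ [r [hr dr kr et]].
have hrq : r != q by apply/eqP=> e; apply: kq; rewrite -e.
case: (boolP ((r.+1 < q) || (q.+1 < r))) => hc.
  set x := swap_adj y q.
  have px : is_perm n x by apply: swap_perm.
  have sx : step x (swap_adj x r).
    apply: (Kstep p px hr hr dr _ _ _ kr).
    - by rewrite /x !nth_swap ?sz; try lia; rewrite !ifN_eq //; lia.
    - by rewrite /x !nth_swap ?sz; try lia; rewrite !ifN_eq //; lia.
    - by move=> w _; rewrite /x index_swap_lt ?sz //; lia.
  have ec : swap_adj x r = swap_adj t q.
    rewrite /x et; case/orP: hc => hc; last by rewrite swap_comm ?sz.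
    by rewrite [RHS](@swap_comm y r q) ?sz //; lia.
  have pt := step_perm st.
  apply: (IH t (step_mes st) q u v pt hq).
  - by rewrite et !nth_swap ?sz; try lia; rewrite !ifN_eq //; lia.
  - by rewrite -ec; apply: NF_step sx hu.
  - exact: NF_step st hv.
have [e|e] : r = q.+1 \/ r.+1 = q by lia.
  subst r.
  have hw := win3 (_ : q.+2 < size y); rewrite sz in hw; move: (hw hr).
  set L := take q y; set c := nth 0 y q; set a := nth 0 y q.+1; set d := nth 0 y q.+2.
  set R := drop q.+3 y => ey.
  have hac : a < c by []. have hda : d < a by [].
  have hL : size L = q by rewrite /L size_takel //; lia.
  have p0 : is_perm n (L ++ [:: c; a; d] ++ R) by rewrite -ey.
  have k1 : K (L ++ [:: c; a; d] ++ R) (size L + 1) by rewrite hL addn1 -ey.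
  have hsz : size L + 3 <= n by lia.
  have pm w : perm_eq w [:: c; a; d] -> is_perm n (L ++ w ++ R) by move/(win_perm p0).
  have x1 : step (L ++ [:: a; c; d] ++ R) (L ++ [:: a; d; c] ++ R).
    apply: (Kwin p0 (pm [:: a; c; d] _) (j:=1) (j':=1) _ _ hsz hsz _ _ _ _ k1) => //=;
    first [lia | (move=> w hw'; rewrite !inE; lia) | (apply/permP=> f /=; lia)].
  have x2 : step (L ++ [:: a; d; c] ++ R) (L ++ [:: d; a; c] ++ R).
    apply: (Kwin p0 (pm [:: a; d; c] _) (j:=1) (j':=0) _ _ hsz hsz _ _ _ _ k1) => //=;
    first [lia | (move=> w hw'; rewrite !inE; lia) | (apply/permP=> f /=; lia)].
  have y1 : step (L ++ [:: c; a; d] ++ R) (L ++ [:: c; d; a] ++ R).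
    apply: (Kwin p0 (pm [:: c; a; d] _) (j:=1) (j':=1) _ _ hsz hsz _ _ _ _ k1) => //=;
    first [lia | (move=> w hw'; rewrite !inE; lia) | (apply/permP=> f /=; lia)].
  have y2 : step (L ++ [:: c; d; a] ++ R) (L ++ [:: d; c; a] ++ R).
    apply: (Kwin p0 (pm [:: c; d; a] _) (j:=1) (j':=0) _ _ hsz hsz _ _ _ _ k1) => //=;
    first [lia | (move=> w hw'; rewrite !inE; lia) | (apply/permP=> f /=; lia)].
  have ex : swap_adj y q = L ++ [:: a; c; d] ++ R by rewrite {1}ey -hL -[size L]addn0 swap_win.
  have ex2 : swap_adj (L ++ [:: d; c; a] ++ R) q.+1 = L ++ [:: d; a; c] ++ R.
    by rewrite -hL -addn1 swap_win.
  have my : mes n (L ++ [:: d; c; a] ++ R) < mes n y.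
    rewrite [in X in _ < X]ey; apply: ltn_trans (step_mes y2) (step_mes y1).
  apply: (IH _ my q.+1 u v (pm _ _) hr).
  - by apply/permP=> f /=; lia.
  - have n1 : nth 0 (L ++ [:: d; c; a] ++ R) q.+1 = c by rewrite -hL -addn1 nth_win.
    have n2 : nth 0 (L ++ [:: d; c; a] ++ R) q.+2 = a by rewrite -hL -addn2 nth_win.
    by rewrite n1 n2.
  - by rewrite ex2; apply: (NF_step x2); apply: (NF_step x1); rewrite -ex.
  - by apply: (NF_step y2); apply: (NF_step y1); rewrite -ey.
subst q.
have hw := win3 (_ : r.+2 < size y); rewrite sz in hw; move: (hw hq).
set L := take r y; set d := nth 0 y r; set c := nth 0 y r.+1; set a := nth 0 y r.+2.
set R := drop r.+3 y => ey.
have hac : a < c by []. have hcd : c < d by [].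
have hL : size L = r by rewrite /L size_takel //; lia.
have p0 : is_perm n (L ++ [:: d; c; a] ++ R) by rewrite -ey.
have k0 : K (L ++ [:: d; c; a] ++ R) (size L + 0) by rewrite hL addn0 -ey.
have hsz : size L + 3 <= n by lia.
have pm w : perm_eq w [:: d; c; a] -> is_perm n (L ++ w ++ R) by move/(win_perm p0).
have x1 : step (L ++ [:: d; a; c] ++ R) (L ++ [:: a; d; c] ++ R).
  apply: (Kwin p0 (pm [:: d; a; c] _) (j:=0) (j':=0) _ _ hsz hsz _ _ _ _ k0) => //=;
  first [lia | (move=> w hw'; rewrite !inE; lia) | (apply/permP=> f /=; lia)].
have x2 : step (L ++ [:: a; d; c] ++ R) (L ++ [:: a; c; d] ++ R).
  apply: (Kwin p0 (pm [:: a; d; c] _) (j:=0) (j':=1) _ _ hsz hsz _ _ _ _ k0) => //=;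
  first [lia | (move=> w hw'; rewrite !inE; lia) | (apply/permP=> f /=; lia)].
have y1 : step (L ++ [:: d; c; a] ++ R) (L ++ [:: c; d; a] ++ R).
  apply: (Kwin p0 (pm [:: d; c; a] _) (j:=0) (j':=0) _ _ hsz hsz _ _ _ _ k0) => //=;
  first [lia | (move=> w hw'; rewrite !inE; lia) | (apply/permP=> f /=; lia)].
have y2 : step (L ++ [:: c; d; a] ++ R) (L ++ [:: c; a; d] ++ R).
  apply: (Kwin p0 (pm [:: c; d; a] _) (j:=0) (j':=1) _ _ hsz hsz _ _ _ _ k0) => //=;
  first [lia | (move=> w hw'; rewrite !inE; lia) | (apply/permP=> f /=; lia)].
have ex : swap_adj y r.+1 = L ++ [:: d; a; c] ++ R by rewrite {1}ey -hL -addn1 swap_win.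
have ex2 : swap_adj (L ++ [:: c; a; d] ++ R) r = L ++ [:: a; c; d] ++ R.
  by rewrite -hL -[size L]addn0 swap_win.
have my : mes n (L ++ [:: c; a; d] ++ R) < mes n y.
  rewrite [in X in _ < X]ey; apply: ltn_trans (step_mes y2) (step_mes y1).
apply: (IH _ my r u v (pm _ _) hr).
- by apply/permP=> f /=; lia.
- have n1 : nth 0 (L ++ [:: c; a; d] ++ R) r.+1 = a by rewrite -hL -addn1 nth_win.
  have n2 : nth 0 (L ++ [:: c; a; d] ++ R) r = c by rewrite -hL -[size L]addn0 nth_win.
  by rewrite n1 n2.
- by rewrite ex2; apply: (NF_step x2); apply: (NF_step x1); rewrite -ex.
- by apply: (NF_step y2); apply: (NF_step y1); rewrite -ey.
Qed.


Lemma nf_mono x u : is_perm n x -> NF x u ->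
  forall y v, is_perm n y -> weak_le x y -> NF y v -> weak_le u v.
Proof.
move=> px hu y; move: y; apply: wf_mes => y IH v py hxy hv.
case: (classic (x = y)) => [e|ne].
  by subst; rewrite (nf_unique px hu hv).
have [r [hr dr ni]] := desc_lemma px py hxy ne.
have py' : is_perm n (swap_adj y r) by apply: swap_perm.
have hxy' : weak_le x (swap_adj y r).
  move=> a b h; apply/(inv_swap_desc _ _ py hr dr); split; first exact: hxy.
  by case=> e1 e2; apply: ni; rewrite -e1 -e2.
have [w hw] := nf_exists py'.
apply: weak_trans (IH _ (mes_step py hr dr) w py' hxy' hw) _.
exact: cover py hr dr hw hv.
Qed.

Lemma star_equiv x u : star x u -> gen_equiv step x u.
Proof.
elim=> [s|s t w st _ IH]; first exact: ge_refl.
exact: ge_trans (ge_step st) IH.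
Qed.

Lemma NF_equiv x y u : NF x u -> NF y u -> gen_equiv step x y.
Proof.
by move=> [h1 _] [h2 _]; apply: ge_trans (star_equiv h1) (ge_sym (star_equiv h2)).
Qed.

Lemma equiv_NF x y : gen_equiv step x y ->
  x = y \/ [/\ is_perm n x, is_perm n y & forall u, NF x u <-> NF y u].
Proof.
elim=> [s t st|s|s t _ IH|s t w _ IH1 _ IH2].
- right; split; [exact: (proj1 st) | exact: step_perm st |] => u; split.
    exact: NF_step st.
  exact: NF_back (star1 st).
- by left.
- case: IH => [e|[h1 h2 h3]]; first by left.
  by right; split=> // u; rewrite h3.
- case: IH1 => [e1|[h1 h2 h3]]; case: IH2 => [e2|[h4 h5 h6]].
  + by left; rewrite e1.
  + by right; rewrite e1; split.
  + by right; rewrite -e2; split.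
  + by right; split=> // u; rewrite h3 h6.
Qed.

Lemma equiv_same_NF x y u : is_perm n x -> gen_equiv step x y -> NF x u -> NF y u.
Proof. by move=> px /equiv_NF [<-|[_ _ h]] //; move/h. Qed.

Lemma meet_half x x' y m m' u um um' :
  is_perm n x -> is_perm n x' -> is_perm n y ->
  NF x u -> NF x' u -> is_meet n x y m -> is_meet n x' y m' -> NF m um -> NF m' um' ->
  weak_le um um'.
Proof.
move=> px px' py hu hu' [pm mx my mU] [pm' mx' my' mU'] hum hum'.
have pum : is_perm n um by apply: star_perm pm (proj1 hum).
have [w hw] := nf_exists py.
have h1 : weak_le um x'.
  apply: weak_trans (nf_mono pm hum px mx hu) _; exact: star_weak (proj1 hu').
have h2 : weak_le um y.
  apply: weak_trans (nf_mono pm hum py my hw) _; exact: star_weak (proj1 hw).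
have h3 := mU' _ pum h1 h2.
have hn : NF um um by split; [apply: st_refl | exact: proj2 hum].
exact (nf_mono pum hn pm' h3 hum').
Qed.


Lemma meet_compat x x' y m m' : is_perm n x -> is_perm n x' -> is_perm n y ->
  gen_equiv step x x' -> is_meet n x y m -> is_meet n x' y m' -> gen_equiv step m m'.
Proof.
move=> px px' py e hm hm'.
have [u hu] := nf_exists px.
have hu' := equiv_same_NF px e hu.
case: (hm) => pm _ _ _; case: (hm') => pm' _ _ _.
have [um hum] := nf_exists pm; have [um' hum'] := nf_exists pm'.
have h1 := meet_half px px' py hu hu' hm hm' hum hum'.
have h2 := meet_half px' px py hu' hu hm' hm hum' hum.
have pum : is_perm n um by apply: star_perm pm (proj1 hum).
have pum' : is_perm n um' by apply: star_perm pm' (proj1 hum').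
have e' : um = um' by exact: inv_eq_perm pum pum' h1 h2.
by apply: NF_equiv hum _; rewrite e'.
Qed.

End Abs.

Definition Kd n (K : seq nat -> nat -> Prop) s q := K (rev (swap_adj s q)) (n - q.+2).

Lemma nth_rs (s : seq nat) q : q.+1 < size s ->
  nth 0 (rev (swap_adj s q)) (size s - q.+2) = nth 0 s q /\
  nth 0 (rev (swap_adj s q)) (size s - q.+2).+1 = nth 0 s q.+1.
Proof.
move=> h; rewrite !nth_rev_nat ?size_swap //; try lia.
have -> : size s - (size s - q.+2).+1 = q.+1 by lia.
have -> : size s - (size s - q.+2).+2 = q by lia.
rewrite !nth_swap // eqxx (gtn_eqF (ltnSn q)) eqxx; split=> //.
Qed.

Lemma idx_rs n (s : seq nat) q v : is_perm n s -> q.+1 < n -> v \in s ->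
  v != nth 0 s q -> v != nth 0 s q.+1 ->
  (index v (rev (swap_adj s q)) < n - q.+2) = ~~ (index v s < q).
Proof.
move=> p hq hv n1 n2; have sz := perm_sizeP p; have u := perm_uniqP p.
have ut : uniq (swap_adj s q) by rewrite (perm_uniq (perm_swap _)) //; lia.
have hv' : v \in swap_adj s q by rewrite (perm_mem (perm_swap _)) //; lia.
rewrite index_rev // size_swap ?sz // index_swap_other ?sz //.
have hi := index_mem_nat s v; rewrite hv sz in hi.
have a1 : index v s != q by apply: index_neq; lia.
have a2 : index v s != q.+1 by apply: index_neq; lia.
lia.
Qed.

Lemma Mono_d n K : Mono n K -> Mono n (Kd n K).
Proof.
move=> HK s s' q q' p p' hq hq' dq h1 h2 hi k.
have sz := perm_sizeP p; have sz' := perm_sizeP p'.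
have hs : q.+1 < size s by lia.
have hs' : q'.+1 < size s' by lia.
have [e1 e2] := nth_rs hs; rewrite sz in e1 e2.
have [e1' e2'] := nth_rs hs'; rewrite sz' in e1' e2'.
apply: (HK _ _ _ _ _ _ _ _ _ _ _ _ k).
- by apply: perm_rev'; apply: swap_perm.
- by apply: perm_rev'; apply: swap_perm.
- by lia.
- by lia.
- by rewrite e1 ?e2 //; lia.
- by rewrite e2 ?e2' //; lia.
- by rewrite e1 ?e1' //; lia.
- move=> v; rewrite e1 e2 => hv.
  have vs : v \in s.
    rewrite (perm_memP _ p); have := mem_nth_nat (ltnW hs).
    have := mem_nth_nat hs.
    rewrite !(perm_memP _ p); lia.
  have vs' : v \in s' by rewrite (perm_mem2 v p' p).
  rewrite idx_rs // ?idx_rs // ?hi //; try (apply/eqP; lia).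
Qed.

Lemma step_d_to n K s t : step n (Kd n K) s t -> step n K (rev t) (rev s).
Proof.
case=> p [q [hq dq k ->]]; have sz := perm_sizeP p.
have hs : q.+1 < size s by lia.
have [e1 e2] := nth_rs hs; rewrite sz in e1 e2.
split; first by apply: perm_rev'; apply: swap_perm.
exists (n - q.+2); split=> //; first by lia.
  by rewrite e1 e2.
by rewrite rev_swap // sz swapK ?size_rev ?sz //; lia.
Qed.

Lemma step_d_from n K s t : is_perm n t -> step n K (rev t) (rev s) -> step n (Kd n K) s t.
Proof.
move=> pt [pr [p [hp dp k e]]]; have sz := perm_sizeP pt.
set q := n - p.+2.
have es : s = swap_adj t q.
  by rewrite -(revK s) e rev_swap ?size_rev ?sz ?revK //; lia.
have ps : is_perm n s by rewrite es; apply: swap_perm => //; lia.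
have et : t = swap_adj s q by rewrite es swapK //; lia.
split=> //; exists q; split=> //; first by lia.
- have hs : q.+1 < size s by rewrite (perm_sizeP ps); lia.
  have [e1 e2] := nth_rs hs; rewrite (perm_sizeP ps) -et in e1 e2.
  rewrite -e1 -e2 (_ : n - q.+2 = p) //; lia.
- by rewrite /Kd -et (_ : n - q.+2 = p) //; lia.
Qed.

Lemma gen_rev n K x y : gen_equiv (step n K) x y -> gen_equiv (step n (Kd n K)) (rev x) (rev y).
Proof.
elim=> [a b st|a|a b _ IH|a b c _ IH1 _ IH2].
- apply: ge_sym; apply: ge_step; apply: step_d_from.
    by apply: perm_rev'; exact: (proj1 st).
  by rewrite !revK.
- exact: ge_refl.
- exact: ge_sym.
- exact: ge_trans IH1 IH2.
Qed.

Lemma gen_unrev n K x y : gen_equiv (step n (Kd n K)) x y -> gen_equiv (step n K) (rev x) (rev y).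
Proof.
elim=> [a b st|a|a b _ IH|a b c _ IH1 _ IH2].
- by apply: ge_sym; apply: ge_step; apply: step_d_to.
- exact: ge_refl.
- exact: ge_sym.
- exact: ge_trans IH1 IH2.
Qed.

Lemma join_meet_rev n x y j : is_perm n x -> is_perm n y -> is_join n x y j ->
  is_meet n (rev x) (rev y) (rev j).
Proof.
move=> px py [pj hx hy hU]; split.
- exact: perm_rev'.
- exact/(weak_le_rev pj px).
- exact/(weak_le_rev pj py).
move=> u pu h1 h2.
have pu' : is_perm n (rev u) by apply: perm_rev'.
rewrite -(revK u) in h1 h2 *.
apply/(weak_le_rev pu' pj); apply: hU => //.
  exact/(weak_le_rev pu' px).
exact/(weak_le_rev pu' py).
Qed.

Lemma join_compat n K x x' y j j' : Mono n K -> is_perm n x -> is_perm n x' -> is_perm n y ->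
  gen_equiv (step n K) x x' -> is_join n x y j -> is_join n x' y j' -> gen_equiv (step n K) j j'.
Proof.
move=> HK px px' py e hj hj'.
have := meet_compat (Mono_d HK) (perm_rev' px) (perm_rev' px') (perm_rev' py) (gen_rev e)
  (join_meet_rev px py hj) (join_meet_rev px' py hj').
by move/gen_unrev; rewrite !revK.
Qed.

Definition Kp (P : vpattern -> Prop) (s : seq nat) q :=
  exists p idx, [/\ P p, occurrence s p idx & nth 0 idx p.2 = q].

Lemma in_take_nat (s : seq nat) v m : v \in s -> (v \in take m s) = (index v s < m).
Proof. exact: in_take. Qed.

Lemma in_drop_nat (s : seq nat) v m : uniq s -> v \in s -> (v \in drop m s) = (m <= index v s).
Proof.
move=> u hv.
have e : (v \in take m s) + (v \in drop m s) = 1.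
  rewrite -(count_uniq_mem v (take_uniq m u)) -(count_uniq_mem v (drop_uniq m u)).
  by rewrite -count_cat cat_take_drop count_uniq_mem // hv.
rewrite in_take_nat // in e.
move: e; case: (ltnP (index v s) m) => h; case: (v \in drop m s) => //.
Qed.

Lemma map_index_nth (w t : seq nat) : uniq w -> size w = size t ->
  [seq nth 0 t (index v w) | v <- w] = t.
Proof.
move=> u hs; apply: (@eq_from_nth _ 0); first by rewrite size_map.
move=> j; rewrite size_map => hj.
by rewrite (nth_map 0) // index_nth_uniq.
Qed.

Section MonoP.
Variable n : nat.
Variable P : vpattern -> Prop.
Hypothesis wb : well_behaved P.
Variables (s s' : seq nat) (q q' : nat).
Hypotheses (p : is_perm n s) (p' : is_perm n s') (hq : q.+1 < n) (hq' : q'.+1 < n)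
  (dq : nth 0 s q.+1 < nth 0 s q) (h1 : nth 0 s' q'.+1 <= nth 0 s q.+1)
  (h2 : nth 0 s q <= nth 0 s' q')
  (hi : forall v, nth 0 s q.+1 < v < nth 0 s q -> (index v s < q) = (index v s' < q')).
Variables (tau : seq nat) (i : nat) (idx : seq nat).
Hypotheses (Pt : P (tau, i)) (oc : occurrence s (tau, i) idx) (iq : nth 0 idx i = q).

Let k := size tau.
Let c := nth 0 s q.
Let a := nth 0 s q.+1.
Let c' := nth 0 s' q'.
Let a' := nth 0 s' q'.+1.
Let val j := nth 0 s (nth 0 idx j).

Lemma wbt : [/\ is_perm k tau /\ i.+1 < k, 2 <= k, nth 0 tau i = k, nth 0 tau i.+1 = 1 &
        forall A' B', perm_eq A' (take i tau) -> perm_eq B' (drop i.+2 tau) ->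
          P (A' ++ k :: 1 :: B', i)].
Proof. by case: (wb Pt). Qed.

Lemma szs : size s = n. Proof. exact: perm_sizeP p. Qed.
Lemma szs' : size s' = n. Proof. exact: perm_sizeP p'. Qed.

Lemma occ_size : size idx = k. Proof. by case: oc. Qed.

Lemma idx_lt j : j < k -> nth 0 idx j < n.
Proof.
case: oc => hs _ hall _ _ hj; rewrite -szs.
by move/(all_nthP 0): hall; apply; rewrite hs.
Qed.

Lemma idx_mono j l : j < l -> l < k -> nth 0 idx j < nth 0 idx l.
Proof.
case: oc => hs hsort _ _ _ hjl hl.
have hs' : size idx = k by rewrite hs.
apply: (sorted_ltn_nth ltn_trans 0 hsort); rewrite ?inE ?hs' //; lia.
Qed.

Lemma idx_i1 : nth 0 idx i.+1 = q.+1.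
Proof. by case: oc => _ _ _ _ /= ->; rewrite iq. Qed.

Lemma ordv j l : j < k -> l < k -> (val j < val l) = (nth 0 tau j < nth 0 tau l).
Proof. by case: oc => _ _ _ ho _; apply: ho. Qed.

Lemma val_i : val i = c. Proof. by rewrite /val iq. Qed.
Lemma val_i1 : val i.+1 = a. Proof. by rewrite /val idx_i1. Qed.

Lemma tau_range j : j < k -> 0 < nth 0 tau j <= k.
Proof.
case: wbt => [[pt _]] _ _ _ _ hj.
by rewrite -(perm_memP _ pt); apply: mem_nth_nat.
Qed.

Lemma tau_ne j l : j < k -> l < k -> j != l -> nth 0 tau j != nth 0 tau l.
Proof.
case: wbt => [[pt _]] _ _ _ _ hj hl hne.
by rewrite nth_uniq_nat // (perm_uniqP pt).
Qed.

Lemma val_range j : j < k -> j != i -> j != i.+1 -> a < val j < c.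
Proof.
move=> hj n1 n2; case: wbt => [[_ hik]] _ ti ti1 _.
have r := tau_range hj.
have t1 := tau_ne hj (ltnW hik) n1; have t2 := tau_ne hj hik n2.
rewrite ti in t1; rewrite ti1 in t2.
have o1 := ordv hik hj; have o2 := ordv hj (ltnW hik).
rewrite ti1 in o1; rewrite ti in o2; rewrite val_i1 in o1; rewrite val_i in o2.
apply/andP; split; [rewrite o1 | rewrite o2]; lia.
Qed.

Lemma index_val j : j < k -> index (val j) s = nth 0 idx j.
Proof. move=> hj; rewrite index_nth_uniq ?(perm_uniqP p) // szs; exact: idx_lt. Qed.

Definition vals' := mkseq (fun j => if j == i then c' else if j == i.+1 then a' else val j) k.

Lemma size_vals' : size vals' = k. Proof. by rewrite size_mkseq. Qed.

Lemma nth_vals' j : j < k ->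
  nth 0 vals' j = if j == i then c' else if j == i.+1 then a' else val j.
Proof. by move=> hj; rewrite nth_mkseq. Qed.

Lemma G j l : j < k -> l < k -> (nth 0 vals' j < nth 0 vals' l) = (nth 0 tau j < nth 0 tau l).
Proof.
move=> hj hl; case: wbt => [[_ hik]] hk2 ti ti1 _.
have H1 : a' <= a := h1. have H2 : c <= c' := h2. have H3 : a < c := dq.
rewrite !nth_vals' //.
have rj := tau_range hj; have rl := tau_range hl.
case: (eqVneq j i) => [ej|nj1].
  subst j; rewrite ti.
  case: (eqVneq l i) => [->|nl1]; first by rewrite ti; lia.
  case: (eqVneq l i.+1) => [->|nl2]; first by rewrite ti1; lia.
  have := val_range hl nl1 nl2;
  have := tau_ne hl (ltnW hik) nl1; rewrite ti; lia.
case: (eqVneq j i.+1) => [ej|nj2].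
  subst j; rewrite ti1.
  case: (eqVneq l i) => [->|nl1]; first by rewrite ti; lia.
  case: (eqVneq l i.+1) => [->|nl2]; first by rewrite ti1; lia.
  have := val_range hl nl1 nl2;
  have := tau_ne hl hik nl2; rewrite ti1; lia.
case: (eqVneq l i) => [->|nl1].
  rewrite ti; have := val_range hj nj1 nj2;
  have := tau_ne hj (ltnW hik) nj1; rewrite ti; lia.
case: (eqVneq l i.+1) => [->|nl2].
  rewrite ti1; have := val_range hj nj1 nj2;
  have := tau_ne hj hik nj2; rewrite ti1; lia.
exact: ordv.
Qed.

Lemma uniq_vals' : uniq vals'.
Proof.
apply/(uniqP 0) => j l; rewrite !inE size_vals' => hj hl e.
have g1 := G hj hl; have g2 := G hl hj.
rewrite e ltnn in g1 g2.
apply: NNPP => ne; have := tau_ne hj hl (introN eqP ne); lia.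
Qed.

Definition F v := nth 0 tau (index v vals').

Lemma F_vals' j : j < k -> F (nth 0 vals' j) = nth 0 tau j.
Proof. by move=> hj; rewrite /F index_nth_uniq ?uniq_vals' ?size_vals'. Qed.

Lemma map_F : map F vals' = tau.
Proof. by apply: map_index_nth; rewrite ?uniq_vals' ?size_vals'. Qed.

Lemma F_mono v w : v \in vals' -> w \in vals' -> (v < w) = (F v < F w).
Proof.
move=> hv hw.
rewrite -(nth_index_nat hv) -(nth_index_nat hw) !F_vals' -?size_vals' ?index_mem_nat //.
by rewrite G -?size_vals' ?index_mem_nat.
Qed.


Lemma take_memP (w : seq nat) m v : m <= size w ->
  v \in take m w <-> exists2 j, j < m & v = nth 0 w j.
Proof.
move=> hm; split.
  move=> hv; exists (index v (take m w)).
    by have := index_mem_nat (take m w) v; rewrite hv size_takel.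
  rewrite -(@nth_take m); last by have := index_mem_nat (take m w) v; rewrite hv size_takel.
  by rewrite nth_index_nat.
case=> j hj ->; rewrite -(@nth_take m) //; apply: mem_nth_nat; rewrite size_takel //.
Qed.

Lemma drop_memP (w : seq nat) m v :
  v \in drop m w <-> exists2 j, m <= j < size w & v = nth 0 w j.
Proof.
split.
  move=> hv; exists (m + index v (drop m w)).
    by have := index_mem_nat (drop m w) v; rewrite hv size_drop; lia.
  by rewrite -nth_drop nth_index_nat.
case=> j hj ->; have -> : j = m + (j - m) by lia.
rewrite -nth_drop; apply: mem_nth_nat; rewrite size_drop; lia.
Qed.

Lemma vals'_i : nth 0 vals' i = c'.
Proof. by case: wbt => [[_ hik]] _ _ _ _; rewrite nth_vals' ?eqxx //; lia. Qed.
Lemma vals'_i1 : nth 0 vals' i.+1 = a'.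
Proof. by case: wbt => [[_ hik]] _ _ _ _; rewrite nth_vals' // (gtn_eqF (ltnSn i)) eqxx. Qed.

Lemma vals'_o j : j < k -> j != i -> j != i.+1 -> nth 0 vals' j = val j.
Proof. by move=> hj n1 n2; rewrite nth_vals' // (negbTE n1) (negbTE n2). Qed.

Lemma val_in_s' j : j < k -> val j \in s'.
Proof. move=> hj; rewrite -(perm_mem2 _ p p'); apply: mem_nth_nat; rewrite szs; exact: idx_lt. Qed.

Lemma idx_c' : index c' s' = q'.
Proof. by rewrite index_nth_uniq ?(perm_uniqP p') ?szs' //; lia. Qed.
Lemma idx_a' : index a' s' = q'.+1.
Proof. by rewrite index_nth_uniq ?(perm_uniqP p') ?szs' //; lia. Qed.

Lemma idx_val_ne j : j < k -> j != i -> j != i.+1 ->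
  index (val j) s' != q' /\ index (val j) s' != q'.+1.
Proof.
move=> hj n1 n2; have r := val_range hj n1 n2.
have H1 : a' <= a := h1. have H2 : c <= c' := h2.
split; apply: index_neq; rewrite ?szs'; try lia; apply/eqP; rewrite -/c' -/a'; lia.
Qed.

Lemma side_val j : j < k -> j != i -> j != i.+1 ->
  (index (val j) s' < q') = (j < i).
Proof.
move=> hj n1 n2; have r := val_range hj n1 n2.
have hik : i.+1 < k by case: wbt => [[_ ?]].
rewrite -hi // index_val //.
case: (ltnP j i) => h.
  by have := idx_mono h (ltnW hik); rewrite iq => ->.
have h' : i.+1 < j by lia.
by have := idx_mono h' hj; rewrite idx_i1; lia.
Qed.

Lemma Lmem v : (v \in [seq x <- take q' s' | x \in vals']) = (v \in take i vals').
Proof.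
have hik : i.+1 < k by case: wbt => [[_ ?]].
have szv := size_vals'.
apply/idP/idP.
  rewrite mem_filter => /andP [hv ht].
  have ix := index_mem_nat vals' v; rewrite hv szv in ix.
  set j := index v vals' in ix.
  have ev : v = nth 0 vals' j by rewrite nth_index_nat.
  have vs' : v \in s' by apply: mem_take ht.
  rewrite in_take_nat // in ht.
  have hti : i <= size vals' by lia.
  apply/(take_memP v hti).
  exists j => //.
  case: (eqVneq j i) => [e|n1]; first by move: ht; rewrite ev e vals'_i idx_c'; lia.
  case: (eqVneq j i.+1) => [e|n2]; first by move: ht; rewrite ev e vals'_i1 idx_a'; lia.
  by move: ht; rewrite ev vals'_o // side_val.
have hti : i <= size vals' by lia.
case/(take_memP v hti) => j hj ->.
have n1 : j != i by lia. have n2 : j != i.+1 by lia.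
rewrite mem_filter mem_nth_nat ?szv ?andbT; last by lia.
rewrite vals'_o //; try lia.
rewrite in_take_nat ?val_in_s' ?side_val //; lia.
Qed.

Lemma Rmem v : (v \in [seq x <- drop q'.+2 s' | x \in vals']) = (v \in drop i.+2 vals').
Proof.
have hik : i.+1 < k by case: wbt => [[_ ?]].
have szv := size_vals'.
have us' := perm_uniqP p'.
apply/idP/idP.
  rewrite mem_filter => /andP [hv ht].
  have ix := index_mem_nat vals' v; rewrite hv szv in ix.
  set j := index v vals' in ix.
  have ev : v = nth 0 vals' j by rewrite nth_index_nat.
  have vs' : v \in s' by apply: mem_drop ht.
  rewrite in_drop_nat // in ht.
  apply/drop_memP; exists j; rewrite ?szv //.
  case: (eqVneq j i) => [e|n1]; first by move: ht; rewrite ev e vals'_i idx_c'; lia.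
  case: (eqVneq j i.+1) => [e|n2]; first by move: ht; rewrite ev e vals'_i1 idx_a'; lia.
  by move: ht; have := side_val ix n1 n2; rewrite ev vals'_o //; lia.
case/drop_memP; rewrite szv => j hj ->.
have n1 : j != i by lia. have n2 : j != i.+1 by lia.
have hjk : j < k by lia.
rewrite mem_filter mem_nth_nat ?szv ?andbT; last by lia.
rewrite vals'_o //.
rewrite in_drop_nat ?val_in_s' //.
have := side_val hjk n1 n2; have [e1 e2] := idx_val_ne hjk n1 n2; lia.
Qed.


Definition idx' := [seq pos <- iota 0 n | nth 0 s' pos \in vals'].
Definition Lp := [seq pos <- iota 0 q' | nth 0 s' pos \in vals'].
Definition Rp := [seq pos <- iota q'.+2 (n - q'.+2) | nth 0 s' pos \in vals'].

Lemma c'_in : c' \in vals'.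
Proof. rewrite -vals'_i; apply: mem_nth_nat; rewrite size_vals'; by case: wbt => [[_ ?]]; lia. Qed.
Lemma a'_in : a' \in vals'.
Proof. rewrite -vals'_i1; apply: mem_nth_nat; rewrite size_vals'; by case: wbt => [[_ ?]]. Qed.

Lemma idx'_split : idx' = Lp ++ q' :: q'.+1 :: Rp.
Proof.
rewrite /idx' /Lp /Rp.
have -> : n = q' + (2 + (n - q'.+2)) by lia.
rewrite iotaD iotaD filter_cat filter_cat /= add0n.
rewrite -/c' -/a' c'_in a'_in.
have E : q' + (2 + (n - q'.+2)) - q'.+2 = n - q'.+2 by lia.
by rewrite E addn2.
Qed.

Lemma map_Lp : map (nth 0 s') Lp = [seq x <- take q' s' | x \in vals'].
Proof. by rewrite /Lp -filter_map map_nth_iota0 // szs'; lia. Qed.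

Lemma map_Rp : map (nth 0 s') Rp = [seq x <- drop q'.+2 s' | x \in vals'].
Proof.
rewrite /Rp -filter_map map_nth_iota ?szs' // take_oversize // size_drop szs' //.
Qed.

Lemma Lperm : perm_eq (map (nth 0 s') Lp) (take i vals').
Proof.
rewrite map_Lp; apply: uniq_perm.
- by apply: filter_uniq; apply: take_uniq; apply: (perm_uniqP p').
- by apply: take_uniq; apply: uniq_vals'.
- exact: Lmem.
Qed.

Lemma Rperm : perm_eq (map (nth 0 s') Rp) (drop i.+2 vals').
Proof.
rewrite map_Rp; apply: uniq_perm.
- by apply: filter_uniq; apply: drop_uniq; apply: (perm_uniqP p').
- by apply: drop_uniq; apply: uniq_vals'.
- exact: Rmem.
Qed.

Lemma size_Lp : size Lp = i.
Proof.
have := perm_size Lperm; rewrite size_map size_takel // size_vals'.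
by case: wbt => [[_ ?]]; lia.
Qed.

Definition tau' := [seq F (nth 0 s' pos) | pos <- idx'].
Definition A' := map F (map (nth 0 s') Lp).
Definition B' := map F (map (nth 0 s') Rp).

Lemma tau'_split : tau' = A' ++ k :: 1 :: B'.
Proof.
case: wbt => [[_ hik]] _ ti ti1 _.
rewrite /tau' idx'_split map_cat /= /A' /B' -!map_comp -/c' -/a'.
by rewrite -vals'_i -vals'_i1 !F_vals' ?ti ?ti1 //; lia.
Qed.

Lemma A'_perm : perm_eq A' (take i tau).
Proof. by rewrite /A' -map_F -map_take; apply: perm_map; apply: Lperm. Qed.

Lemma B'_perm : perm_eq B' (drop i.+2 tau).
Proof. by rewrite /B' -map_F -map_drop; apply: perm_map; apply: Rperm. Qed.

Lemma P_tau' : P (tau', i).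
Proof. case: wbt => _ _ _ _ hcl; rewrite tau'_split; exact: hcl A'_perm B'_perm. Qed.

Lemma idx'_i : nth 0 idx' i = q'.
Proof. by rewrite idx'_split nth_cat size_Lp ltnn subnn. Qed.
Lemma idx'_i1 : nth 0 idx' i.+1 = q'.+1.
Proof. by rewrite idx'_split nth_cat size_Lp ltnNge leqnSn /= subSnn. Qed.

Lemma occ' : occurrence s' (tau', i) idx'.
Proof.
split.
- by rewrite /tau' size_map.
- by apply: sorted_filter; [exact: ltn_trans | exact: iota_ltn_sorted].
- rewrite all_filter; apply/allP => x; rewrite mem_iota => hx; apply/implyP => _.
  rewrite szs'; lia.
- move=> j l; rewrite /= /tau' size_map => hj hl.
  rewrite !(nth_map 0) //.
  apply: F_mono.
  + by have := mem_nth_nat hj; rewrite mem_filter => /andP [].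
  + by have := mem_nth_nat hl; rewrite mem_filter => /andP [].
- by rewrite /= idx'_i idx'_i1.
Qed.

Lemma Kp_concl : Kp P s' q'.
Proof. exists (tau', i), idx'; split; [exact: P_tau' | exact: occ' | exact: idx'_i]. Qed.

End MonoP.

Lemma Mono_Kp n P : well_behaved P -> Mono n (Kp P).
Proof.
move=> wb s s' q q' p p' hq hq' dq h1 h2 hi [[tau i] [idx [Pt oc iq]]].
exact: (Kp_concl wb p p' hq hq' dq h1 h2 hi Pt oc iq).
Qed.

Lemma rewrite_step_iff n P s t : well_behaved P ->
  rewrite_step P n s t <-> step n (Kp P) s t.
Proof.
move=> wb; split.
  case=> ps [[tau i] [idx [Pt oc ->]]]; split=> //.
  case: (wb _ _ Pt); rewrite /= => -[[_ hik]] hk ti ti1 _.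
  case: (oc) => hs _ hall ho hadj; rewrite /= in hik hs ho hadj.
  have sz := perm_sizeP ps.
  exists (nth 0 idx i); split.
  - rewrite -hadj -sz; move/(all_nthP 0): hall; apply; rewrite hs //.
  - rewrite -hadj ho; rewrite /= ?ti ?ti1; lia.
  - by exists (tau, i), idx.
  - by [].
case=> ps [q [hq dq [pat [idx [Pt oc iq]]] ->]]; split=> //.
by exists pat, idx; split=> //; rewrite iq.
Qed.

Lemma gen_equiv_iff (R R' : seq nat -> seq nat -> Prop) x y :
  (forall s t, R s t -> R' s t) -> gen_equiv R x y -> gen_equiv R' x y.
Proof.
move=> h; elim=> [a b /h|a|a b _|a b c _ IH1 _ IH2].
- exact: ge_step.
- exact: ge_refl.
- exact: ge_sym.
- exact: ge_trans IH1 IH2.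
Qed.

Lemma avoid_normal n P s : well_behaved P -> is_perm n s ->
  avoids_all P s <-> normal n (Kp P) s.
Proof.
move=> wb ps; split.
  move=> ha t [_ [q [_ _ [pat [idx [Pt oc _]]] _]]].
  by apply: (ha pat Pt); exists idx.
move=> hn pat Pt [idx oc].
apply: (hn (swap_adj s (nth 0 idx pat.2))); apply/rewrite_step_iff => //.
by split=> //; exists pat, idx.
Qed.

Theorem mainTheorem20 (P : vpattern -> Prop) (n : nat) :
  well_behaved P -> 1 <= n ->
  lattice_congruence n (gen_equiv (rewrite_step P n)) /\
  (forall pi, is_perm n pi ->
     exists sigma,
       [/\ is_perm n sigma,
           gen_equiv (rewrite_step P n) sigma pi,
           avoids_all P sigma,
           (forall rho, is_perm n rho -> gen_equiv (rewrite_step P n) rho pi ->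
              weak_le sigma rho) &
           (forall sigma', is_perm n sigma' ->
              gen_equiv (rewrite_step P n) sigma' pi -> avoids_all P sigma' ->
              sigma' = sigma)]).
Proof.
move=> wb _.
have HK : Mono n (Kp P) := Mono_Kp wb.
have to s t : rewrite_step P n s t -> step n (Kp P) s t by move/rewrite_step_iff; apply.
have fr s t : step n (Kp P) s t -> rewrite_step P n s t by move/rewrite_step_iff; apply.
split.
  split.
  - move=> x _; exact: ge_refl.
  - move=> x y _ _; exact: ge_sym.
  - move=> x y z _ _ _; exact: ge_trans.
  - move=> x x' y j j' px px' py e hj hj'.
    apply: (gen_equiv_iff fr); apply: (join_compat HK px px' py _ hj hj').
    exact: gen_equiv_iff to e.
  - move=> x x' y m m' px px' py e hm hm'.
    apply: (gen_equiv_iff fr); apply: (meet_compat HK px px' py _ hm hm').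
    exact: gen_equiv_iff to e.
move=> pi ppi.
have [sigma hs] := nf_exists (Kp P) ppi.
have psig : is_perm n sigma by apply: star_perm (proj1 hs).
have cls rho : is_perm n rho -> gen_equiv (rewrite_step P n) rho pi -> NF n (Kp P) rho sigma.
  move=> prho e; apply: (equiv_same_NF HK ppi _ hs).
  exact: ge_sym (gen_equiv_iff to e).
exists sigma; split=> //.
- apply: ge_sym; apply: (gen_equiv_iff fr); exact: star_equiv (proj1 hs).
- by apply/(avoid_normal wb psig); exact: (proj2 hs).
- move=> rho prho e; exact: star_weak (proj1 (cls rho prho e)).
- move=> s' ps' e ha.
  have hn := proj1 (avoid_normal wb ps') ha.
  by rewrite (NF_normal hn (cls s' ps' e)).
Qed.
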